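(* Let $SP_t(k)$ denote the smallest $n$ such that $PPL_t(n)=k$, and write $(w)_4$ for the integer whose base-4 representation is the digit string $w$. Then $SP_t(3k+2)=((12)^k2)_4$ for all $k\geq 0$; $SP_t(3k)=(1(12)^{k-1}2)_4$ for all $k\geq 1$; and $SP_t(3k+1)=(2(12)^{k-1}2)_4$ for all $k\geq 1$. Here $(12)^k$ denotes the digit string $12$ repeated $k$ times.
   Context: The Thue-Morse word $t=t[1]t[2]\cdots=abbabaabbaababba\cdots$ is the fixed point starting with $a$ of the morphism $a\mapsto abba,\ b\mapsto baab$. A palindrome is a word $p=p[1]\cdots p[n]$ with $p[i]=p[n-i+1]$ for all $i$. $PPL_t(n)$ is the minimal number of nonempty palindromes whose concatenation equals the prefix of $t$ of length $n$. *)

(* Defs.v *)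
From mathcomp Require Import all_boot.
Set Implicit Arguments. Unset Strict Implicit. Unset Printing Implicit Defensive.

(* Letters: a = false, b = true. *)
Definition tm_morph (w : seq bool) : seq bool :=
  flatten [seq [:: x; ~~ x; ~~ x; x] | x <- w].

(* phi^n(a) has length 4^n >= n and is a prefix of the fixed point t,
   so the prefix of t of length n is the first n letters of phi^n(a). *)
Definition tm_prefix (n : nat) : seq bool := take n (iter n tm_morph [:: false]).

Definition palindrome (p : seq bool) : bool := p == rev p.

Definition pal_factorization (w : seq bool) (s : seq (seq bool)) : Prop :=
  flatten s = w /\ all (fun p => (p != [::]) && palindrome p) s.

Definition PPL_t_is (n k : nat) : Prop :=
  (exists s, pal_factorization (tm_prefix n) s /\ size s = k) /\
  (forall s, pal_factorization (tm_prefix n) s -> k <= size s).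

Definition SP_t_is (k N : nat) : Prop :=
  PPL_t_is N k /\ (forall m, m < N -> ~ PPL_t_is m k).

(* (w)_4 : value of the base-4 digit string w (most significant first). *)
Definition base4 (ds : seq nat) : nat := foldl (fun acc d => acc * 4 + d) 0 ds.

Definition rep12 (k : nat) : seq nat := flatten (nseq k [:: 1; 2]).

(* Main.v *)
Require Import Defs.
From mathcomp Require Import all_boot zify.
Set Implicit Arguments. Unset Strict Implicit. Unset Printing Implicit Defensive.

Fixpoint Tf (f n : nat) : bool :=
  if f is f'.+1 then
    (if n is 0 then false else xorb (Tf f' (n %/ 4)) ((n %% 4 == 1) || (n %% 4 == 2)))
  else false.
Definition T n := Tf n n.

Lemma Tf_ok f g n : n <= f -> n <= g -> Tf f n = Tf g n.
Proof.
elim: f g n => [|f IH] [|g] [|n] //= Hf Hg.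
by rewrite (IH g) //; lia.
Qed.

Lemma T4 j r : r < 4 -> T (4 * j + r) = xorb (T j) ((r == 1) || (r == 2)).
Proof.
move=> Hr; have [E|Hpos] := posnP (4 * j + r).
  have Hj : j = 0 by lia. have Hr0 : r = 0 by lia. by rewrite Hj Hr0.
rewrite /T -(prednK Hpos) /= (prednK Hpos).
have -> : (4 * j + r) %/ 4 = j by lia.
have -> : (4 * j + r) %% 4 = r by lia.
by rewrite (Tf_ok (g := j)) //; lia.
Qed.

Lemma T40 j : T (4 * j) = T j.
Proof. by have := T4 j (isT : 0 < 4); rewrite addn0 => ->; case: (T j). Qed.
Lemma T41 j : T (4 * j + 1) = ~~ T j.
Proof. by rewrite T4 //; case: (T j). Qed.
Lemma T42 j : T (4 * j + 2) = ~~ T j.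
Proof. by rewrite T4 //; case: (T j). Qed.
Lemma T43 j : T (4 * j + 3) = T j.
Proof. by rewrite T4 //; case: (T j). Qed.

Fixpoint Uf (f n : nat) : nat :=
  if f is f'.+1 then
    (if n is 0 then 0 else
     match n %% 4 with
     | 0 => Uf f' (n %/ 4)
     | 1 => (Uf f' (n %/ 4)).+1
     | 2 => (minn (Uf f' (n %/ 4)) (Uf f' (n %/ 4).+1)).+2
     | _ => (Uf f' (n %/ 4).+1).+1
     end)
  else 0.
Definition U n := Uf n n.

Lemma Uf_ok f g n : n <= f -> n <= g -> Uf f n = Uf g n.
Proof.
elim: f g n => [|f IH] [|g] [|n] //= Hf Hg.
have H4 : n.+1 %% 4 < 4 by rewrite ltn_mod.
have Hd := divn_eq n.+1 4.
case E: (n.+1 %% 4) => [|[|[|r]]].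
- by rewrite (IH g) //; lia.
- by rewrite (IH g) //; lia.
- by rewrite (IH g) ?(IH g (n.+1 %/ 4).+1) //; lia.
- by rewrite (IH g) //; lia.
Qed.

Lemma Urec m r : r < 4 -> 0 < 4 * m + r ->
  U (4 * m + r) = match r with
     | 0 => U m
     | 1 => (U m).+1
     | 2 => (minn (U m) (U m.+1)).+2
     | _ => (U m.+1).+1 end.
Proof.
move=> Hr Hpos.
rewrite /U -(prednK Hpos) /= (prednK Hpos).
have -> : (4 * m + r) %/ 4 = m by lia.
have -> : (4 * m + r) %% 4 = r by lia.
case: r Hr Hpos => [|[|[|[|r]]]] // _ Hpos.
- by rewrite (Uf_ok (g := m)) //; lia.
- by rewrite (Uf_ok (g := m)) //; lia.
- by rewrite (Uf_ok (g := m)) ?(Uf_ok (n := m.+1) (g := m.+1)) //; lia.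
- by rewrite (Uf_ok (g := m.+1)) //; lia.
Qed.

Lemma U0 : U 0 = 0. Proof. by []. Qed.
Lemma U40 m : U (4 * m) = U m.
Proof. case: m => [|m] //. have := @Urec m.+1 0 isT; rewrite addn0; apply; lia. Qed.
Lemma U41 m : U (4 * m + 1) = (U m).+1.
Proof. by rewrite Urec //; lia. Qed.
Lemma U42 m : U (4 * m + 2) = (minn (U m) (U m.+1)).+2.
Proof. by rewrite Urec //; lia. Qed.
Lemma U43 m : U (4 * m + 3) = (U m.+1).+1.
Proof. by rewrite Urec //; lia. Qed.
Lemma U1 : U 1 = 1. Proof. by have := U41 0; rewrite U0. Qed.
Lemma U2 : U 2 = 2. Proof. by have := U42 0; rewrite U0 U1. Qed.

Lemma U_step n : U n.+1 <= (U n).+1 /\ U n <= (U n.+1).+1.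
Proof.
elim/ltn_ind: n => n IH.
have Hd := divn_eq n 4; have Hr : n %% 4 < 4 by rewrite ltn_mod.
move: Hd Hr; set m := n %/ 4; set r := n %% 4.
case: r => [|[|[|[|r]]]] // Hd _.
- have -> : n = 4 * m by lia. have -> : (4 * m).+1 = 4 * m + 1 by lia.
  rewrite U41 U40; lia.
- have [H1 H2] : U m.+1 <= (U m).+1 /\ U m <= (U m.+1).+1.
    by apply: IH; lia.
  have -> : n = 4 * m + 1 by lia. have -> : (4 * m + 1).+1 = 4 * m + 2 by lia.
  rewrite U42 U41; lia.
- have [H1 H2] : U m.+1 <= (U m).+1 /\ U m <= (U m.+1).+1.
    by apply: IH; lia.
  have -> : n = 4 * m + 2 by lia. have -> : (4 * m + 2).+1 = 4 * m + 3 by lia.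
  rewrite U43 U42; lia.
- have -> : n = 4 * m + 3 by lia. have -> : (4 * m + 3).+1 = 4 * m.+1 by lia.
  rewrite U43 U40; lia.
Qed.

Definition pal i n := forall x y, i <= x -> i <= y -> x < n -> y < n -> x + y + 1 = i + n -> T x = T y.

Lemma pal_shrink i n : pal i n.+1 -> pal i.+1 n.
Proof. move=> H x y *; apply: H; lia. Qed.

Lemma pal1 i : pal i i.+1.
Proof. move=> x y *; have -> : x = y by lia. by []. Qed.

Lemma T2 u : T (2 * u + 1) = ~~ T (2 * u).
Proof.
have Hd := divn_eq u 2; have Hr : u %% 2 < 2 by rewrite ltn_mod.
move: Hd Hr; set v := u %/ 2; case: (u %% 2) => [|[|r]] // Hd _.
- have -> : 2 * u + 1 = 4 * v + 1 by lia. have -> : 2 * u = 4 * v by lia.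
  by rewrite T41 T40.
- have -> : 2 * u + 1 = 4 * v + 3 by lia. have -> : 2 * u = 4 * v + 2 by lia.
  by rewrite T43 T42 negbK.
Qed.

Lemma pal_block i n a b r : pal i n -> r < 4 -> i = 4 * a + r -> n + r = 4 * b -> pal a b.
Proof.
move=> H Hr Hi Hn.
have key : forall x y, a <= x -> x < y -> y < b -> x + y + 1 = a + b -> T x = T y.
  move=> x y *; rewrite -T43 -(T40 y); apply: H; lia.
move=> x y H1 H2 H3 H4 H5.
case: (ltngtP x y) => Hxy.
- by apply: key.
- by symmetry; apply: key; lia.
- by rewrite Hxy.
Qed.

Lemma pal_U n i : i < n -> pal i n -> U n <= (U i).+1.
Proof.
elim/ltn_ind: n i => n IH i Hin H.
have [Heq|Hlt] := eqVneq n i.+1.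
  by rewrite Heq; case: (U_step i).
have Hin2 : i.+2 <= n by rewrite ltn_neqAle eq_sym Hlt Hin.
have Hd := divn_eq i 4; have Hr : i %% 4 < 4 by rewrite ltn_mod.
move: Hd Hr; set a := i %/ 4; set r := i %% 4 => Hd Hr.
case: (boolP (odd (i + n))) => Hpar.
-
  have [c Hc] : exists c, i + n = 2 * c + 1.
    exists ((i + n) %/ 2). have := divn_eq (i + n) 2. rewrite modn2 Hpar. lia.
  have Hcc : T c.-1 = T c.+1 by apply: H; lia.
  have Hdc := divn_eq c 4; have Hrc : c %% 4 < 4 by rewrite ltn_mod.
  move: Hdc Hrc Hcc; set j := c %/ 4; case: (c %% 4) => [|[|[|[|rc]]]] // Hdc _.
  +
    have Hj : 0 < j by lia.
    have -> : c.-1 = 4 * j.-1 + 3 by lia. have -> : c.+1 = 4 * j + 1 by lia.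
    rewrite T43 T41 => Hcc.
    have Hn3 : n = i + 3.
      case: (ltnP (i + 3) n) => Hn5; last lia.
      have : T (c - 2) = T (c + 2) by apply: H; lia.
      have -> : c - 2 = 4 * j.-1 + 2 by lia. have -> : c + 2 = 4 * j + 2 by lia.
      rewrite !T42 Hcc; by case: (T j).
    have -> : n = 4 * j + 2 by lia. have -> : i = 4 * j.-1 + 3 by lia.
    rewrite U42 U43 prednK //; lia.
  + have -> : c.-1 = 4 * j by lia. have -> : c.+1 = 4 * j + 2 by lia.
    rewrite T40 T42; by case: (T j).
  + have -> : c.-1 = 4 * j + 1 by lia. have -> : c.+1 = 4 * j + 3 by lia.
    rewrite T41 T43; by case: (T j).
  + have -> : c.-1 = 4 * j + 2 by lia. have -> : c.+1 = 4 * j.+1 by lia.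
    rewrite T42 T40 => Hcc.
    have Hn3 : n = i + 3.
      case: (ltnP (i + 3) n) => Hn5; last lia.
      have : T (c - 2) = T (c + 2) by apply: H; lia.
      have -> : c - 2 = 4 * j + 1 by lia. have -> : c + 2 = 4 * j.+1 + 1 by lia.
      rewrite !T41 -Hcc; by case: (T j).
    have -> : n = 4 * j.+1 + 1 by lia. have -> : i = 4 * j + 2 by lia.
    rewrite U41 U42. have := U_step j. lia.
-
  have [c Hc] : exists c, i + n = 2 * c.
    exists ((i + n) %/ 2). have := divn_eq (i + n) 2. rewrite modn2 (negbTE Hpar). lia.
  have Hcc : T c.-1 = T c by apply: H; lia.
  have Hce : ~~ odd c.
    apply/negP => Hodd.
    have [u Hu] : exists u, c = 2 * u + 1.
      exists (c %/ 2). have := divn_eq c 2. rewrite modn2 Hodd. lia.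
    move: Hcc; rewrite Hu. have -> : (2 * u + 1).-1 = 2 * u by lia. rewrite T2. by case: (T (2 * u)).
  have [b Hb] : exists b, n + r = 4 * b.
    exists ((n + r) %/ 4).
    have [c2 Hc2] : exists c2, c = 2 * c2.
      exists (c %/ 2). have := divn_eq c 2. rewrite modn2 (negbTE Hce). lia.
    have := divn_eq (n + r) 4. have Hm : (n + r) %% 4 = 0 by lia. lia.
  have Hab : pal a b by apply: (pal_block H Hr); lia.
  have IHab : a < b -> U b <= (U a).+1.
    move=> Hab'; apply: IH => //; lia.
  have IHin : a.+1 < b.-1 -> U b.-1 <= (U a.+1).+1.
    move=> Hab'; apply: IH; [lia | lia |].
    apply: pal_shrink; rewrite prednK; [exact: Hab | lia].
  move: Hd Hr Hb IHab IHin; case: r => [|[|[|[|r]]]] // Hd _ Hb IHab IHin.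
  + have -> : n = 4 * b by lia. have -> : i = 4 * a by lia.
    rewrite !U40; apply: IHab; lia.
  + have -> : n = 4 * b.-1 + 3 by lia. have -> : i = 4 * a + 1 by lia.
    rewrite U43 U41 prednK; [|lia]. have := IHab ltac:(lia). lia.
  + have -> : n = 4 * b.-1 + 2 by lia. have -> : i = 4 * a + 2 by lia.
    rewrite U42 U42 prednK; [|lia]. have := IHab ltac:(lia).
    case: (ltnP a.+1 b.-1) => Hx.
    * have := IHin Hx. lia.
    * have -> : b.-1 = a.+1 by lia. lia.
  + have -> : n = 4 * b.-1 + 1 by lia. have -> : i = 4 * a + 3 by lia.
    rewrite U41 U43.
    case: (ltnP a.+1 b.-1) => Hx.
    * have := IHin Hx. lia.
    * have -> : b.-1 = a.+1 by lia. lia.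
Qed.

Lemma nth_mapT i L k : k < L -> nth false [seq T x | x <- iota i L] k = T (i + k).
Proof. by move=> Hk; rewrite (nth_map 0) ?size_iota // nth_iota. Qed.

Lemma palP1 i L : palindrome [seq T x | x <- iota i L] -> pal i (i + L).
Proof.
move=> /eqP Hp x y H1 H2 H3 H4 H5.
have := congr1 (nth false ^~ (x - i)) Hp.
rewrite nth_rev ?size_map ?size_iota; last lia.
rewrite !nth_mapT; try lia.
have E1 : i + (x - i) = x by lia. have E2 : i + (L - (x - i).+1) = y by lia.
by rewrite E1 E2.
Qed.

Lemma palP2 i L : pal i (i + L) -> palindrome [seq T x | x <- iota i L].
Proof.
move=> H; apply/eqP; apply: (eq_from_nth (x0 := false)); first by rewrite size_rev.
rewrite size_map size_iota => k Hk.
rewrite nth_rev ?size_map ?size_iota // !nth_mapT; try lia.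
apply: H; lia.
Qed.

Lemma morph_blocks m s : tm_morph [seq T x | x <- iota s m] = [seq T x | x <- iota (4 * s) (4 * m)].
Proof.
elim: m s => [|m IH] s; first by rewrite muln0.
have -> : 4 * m.+1 = (4 * m).+4 by lia.
rewrite /tm_morph /= -/(tm_morph _) IH.
have -> : 4 * s.+1 = (4 * s).+4 by lia.
have E1 : T (4 * s).+1 = ~~ T s by rewrite -addn1 T41.
have E2 : T (4 * s).+2 = ~~ T s by rewrite -addn2 T42.
have E3 : T (4 * s).+3 = T s by rewrite -addn3 T43.
by rewrite /= E1 E2 E3 T40.
Qed.

Lemma iter_morph k : iter k tm_morph [:: false] = [seq T x | x <- iota 0 (4 ^ k)].
Proof.
elim: k => [|k IH] //=. by rewrite IH morph_blocks expnS.
Qed.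

Lemma tm_prefixE n : tm_prefix n = [seq T x | x <- iota 0 n].
Proof.
rewrite /tm_prefix iter_morph -map_take take_iota.
by rewrite (minn_idPl _) // ltnW // ltn_expl.
Qed.

Lemma lb s i L : flatten s = [seq T x | x <- iota i L] ->
  all (fun p => (p != [::]) && palindrome p) s -> U (i + L) <= U i + size s.
Proof.
elim: s i L => [|p s IH] i L /=.
  by case: L => [|L] //= _ _; rewrite !addn0.
move=> Hf /andP [/andP [Hne Hp] Hall].
have Hsz : size p <= L.
  by have := congr1 size Hf; rewrite size_cat size_map size_iota => <-; apply: leq_addr.
have Hp1 : p = [seq T x | x <- iota i (size p)].
  have E := congr1 (take (size p)) Hf. rewrite /= take_size_cat in E; last by []. rewrite {1}E.
  by rewrite -map_take take_iota (minn_idPl Hsz).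
have Hs1 : flatten s = [seq T x | x <- iota (i + size p) (L - size p)].
  have E := congr1 (drop (size p)) Hf. rewrite /= drop_size_cat in E; last by []. rewrite E.
  by rewrite -map_drop drop_iota.
have := IH _ _ Hs1 Hall.
have Hpos : 0 < size p by rewrite lt0n size_eq0.
have Hpal : pal i (i + size p) by apply: palP1; rewrite -Hp1.
have := pal_U (i := i) (n := i + size p) ltac:(lia) Hpal.
have -> : i + size p + (L - size p) = i + L by lia.
lia.
Qed.

Inductive rch : nat -> nat -> Prop :=
| rch0 k : rch 0 k
| rchS m n k : rch m k -> m < n -> pal m n -> rch n k.+1.

Lemma rch_mono n k k2 : rch n k -> k <= k2 -> rch n k2.
Proof.
move=> H; elim: H k2 => [k0|m0 n0 k0 H0 IH Hmn Hp] k2 Hk; first exact: rch0.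
case: k2 Hk => [|k2] // Hk. apply: rchS Hmn Hp. exact: IH.
Qed.

Lemma rchS' m n k : rch m k -> m <= n -> pal m n -> rch n k.+1.
Proof.
move=> H Hmn Hp; case: (ltnP m n) => Hlt.
  exact: rchS H Hlt Hp.
have -> : n = m by lia. exact: rch_mono H _.
Qed.

Lemma rch_inv n k : rch n k -> 0 < n -> exists m k', [/\ k = k'.+1, rch m k', m < n & pal m n].
Proof. case=> [k0|m n' k' H Hmn Hp] //= _. by exists m, k'. Qed.

Lemma pal4 x y : pal x y -> pal (4 * x) (4 * y).
Proof.
move=> H p q H1 H2 H3 H4 H5.
have Hdp := divn_eq p 4; have Hrp : p %% 4 < 4 by rewrite ltn_mod.
have Hdq := divn_eq q 4; have Hrq : q %% 4 < 4 by rewrite ltn_mod.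
move: Hdp Hrp Hdq Hrq; set u := p %/ 4; set v := q %/ 4; set rp := p %% 4; set rq := q %% 4.
move=> Hdp Hrp Hdq Hrq.
have Hs : rp + rq = 3 by lia.
have Huv : T u = T v by apply: H; lia.
have -> : p = 4 * u + rp by lia. have -> : q = 4 * v + rq by lia.
rewrite !T4 // Huv. have -> : rq = 3 - rp by lia.
move: (rp) Hrp => r0; by case: r0 => [|[|[|[|]]]].
Qed.

Lemma rch4 m k : rch m k -> rch (4 * m) k.
Proof.
elim=> [k0|m' n k1 H IH Hmn Hp]; first exact: rch0.
apply: rchS IH _ (pal4 Hp). lia.
Qed.

Lemma rch_single m k : rch m k -> rch m.+1 k.+1.
Proof. move=> H; apply: (rchS H); [exact: ltnSn | exact: pal1]. Qed.

Lemma rch_ub n : rch n (U n).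
Proof.
elim/ltn_ind: n => n IH.
have Hd := divn_eq n 4; have Hr : n %% 4 < 4 by rewrite ltn_mod.
move: Hd Hr; set m := n %/ 4; case: (n %% 4) => [|[|[|[|r]]]] // Hd _.
- case: (posnP m) => Hm.
    have -> : n = 0 by lia. exact: rch0.
  have -> : n = 4 * m by lia. rewrite U40. apply: rch4; apply: IH; lia.
- have -> : n = 4 * m + 1 by lia. rewrite U41.
  rewrite addn1; apply: rch_single. rewrite -U40. apply: rch4. rewrite U40.
  case: (posnP m) => Hm; first by rewrite Hm; exact: rch0.
  apply: IH; lia.
- have -> : n = 4 * m + 2 by lia. rewrite U42.
  have Hm : rch (4 * m) (U m).
    case: (posnP m) => Hm; first by rewrite Hm; exact: rch0.
    apply: rch4; apply: IH; lia.
  case: (leqP (U m) (U m.+1)) => Hle.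
  +
    have -> : 4 * m + 2 = (4 * m).+1.+1 by lia.
    by do 2 apply: rch_single.
  +
    have := IH m.+1 ltac:(lia).
    case/rch_inv => // m' [k' [Hk Hr Hm' Hp]].
    rewrite Hk.
    have H4 := rch4 Hr.
    have H5 : rch (4 * m').+1 k'.+1 by apply: rch_single.
    have H6 : rch (4 * m').+2 k'.+2 by apply: rch_single.
    apply: rchS' H6 _ _; first lia.
    have Hp4 := pal4 Hp.
    have : pal (4 * m').+1 (4 * m + 3).
      apply: pal_shrink. by have -> : (4 * m + 3).+1 = 4 * m.+1 by lia.
    have -> : 4 * m + 3 = (4 * m + 2).+1 by lia.
    exact: pal_shrink.
- have -> : n = 4 * m + 3 by lia. rewrite U43.
  have := IH m.+1 ltac:(lia).
  case/rch_inv => // m' [k' [Hk Hr Hm' Hp]].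
  rewrite Hk.
  have H4 := rch4 Hr.
  have H5 : rch (4 * m').+1 k'.+1 by apply: rch_single.
  apply: rchS' H5 _ _; first lia.
  apply: pal_shrink. have -> : (4 * m + 3).+1 = 4 * m.+1 by lia.
  exact: pal4.
Qed.

Lemma rch_fact n k : rch n k -> exists s, flatten s = [seq T x | x <- iota 0 n] /\
  all (fun p => (p != [::]) && palindrome p) s /\ size s <= k.
Proof.
elim=> [k0|m n' k' H [s [Hf [Ha Hs]]] Hmn Hp]; first by exists [::].
exists (rcons s [seq T x | x <- iota m (n' - m)]); split; [|split].
- rewrite flatten_rcons Hf -map_cat -iotaD. by rewrite subnKC // ltnW.
- rewrite all_rcons Ha andbT. apply/andP; split.
    by rewrite -size_eq0 size_map size_iota; lia.
  apply: palP2. by rewrite subnKC // ltnW.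
- by rewrite size_rcons.
Qed.

Lemma PPL_U n : PPL_t_is n (U n).
Proof.
rewrite /PPL_t_is /pal_factorization tm_prefixE.
have Hlb : forall s, flatten s = [seq T x | x <- iota 0 n] /\
    all (fun p => (p != [::]) && palindrome p) s -> U n <= size s.
  by move=> s [Hf Ha]; have := lb Hf Ha.
split=> //.
have [s [Hf [Ha Hs]]] := rch_fact (rch_ub n).
exists s; split => //. have := Hlb s (conj Hf Ha). lia.
Qed.

Lemma PPL_uniq n k : PPL_t_is n k -> k = U n.
Proof.
move=> [[s [Hs Hsz]] Hmin]. have [[s' [Hs' Hsz']] Hmin'] := PPL_U n.
have := Hmin _ Hs'; have := Hmin' _ Hs. lia.
Qed.

Definition Rg a j := foldl (fun acc d => acc * 4 + d) a (rep12 j).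

Lemma RgS a j : Rg a j.+1 = Rg ((a * 4 + 1) * 4 + 2) j.
Proof. by []. Qed.

Lemma Rg_add a j : Rg a j = a * 4 ^ (2 * j) + Rg 0 j.
Proof.
elim: j a => [|j IH] a; first by rewrite /Rg /= muln1 addn0.
rewrite RgS [Rg 0 _]RgS IH [Rg 6 _]IH.
have -> : 2 * j.+1 = (2 * j).+2 by lia.
rewrite !expnS. lia.
Qed.

Lemma U_blk a : U a <= U a.+1 ->
  U ((a * 4 + 1) * 4 + 2) = U a + 3 /\ U ((a * 4 + 1) * 4 + 2) <= U ((a * 4 + 1) * 4 + 2).+1.
Proof.
move=> H.
have E1 : U ((a * 4 + 1) * 4 + 2) = U a + 3.
  rewrite mulnC U42 [a * 4]mulnC U41.
  have -> : (4 * a + 1).+1 = 4 * a + 2 by lia.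
  rewrite U42; lia.
split => //.
have -> : ((a * 4 + 1) * 4 + 2).+1 = 4 * (a * 4 + 1) + 3 by lia.
rewrite U43 E1 mulnC.
have -> : (4 * a + 1).+1 = 4 * a + 2 by lia.
rewrite U42; lia.
Qed.

Lemma Rg_U a j : U a <= U a.+1 -> U (Rg a j) = U a + 3 * j /\ U (Rg a j) <= U (Rg a j).+1.
Proof.
elim: j a => [|j IH] a H; first by rewrite /Rg /= addn0.
rewrite RgS. have [E1 E2] := U_blk H.
have [F1 F2] := IH _ E2. split => //. rewrite F1 E1. lia.
Qed.

Lemma U_end X : U X <= U X.+1 -> U (X * 4 + 2) = U X + 2.
Proof. move=> H; rewrite mulnC U42; lia. Qed.

Lemma split_lead l w : w < 4 ^ l.+1 -> exists c w', [/\ c < 4, w' < 4 ^ l & w = c * 4 ^ l + w'].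
Proof.
move=> Hw; exists (w %/ 4 ^ l), (w %% 4 ^ l); split.
- by rewrite ltn_divLR ?expn_gt0 // -expnS.
- by rewrite ltn_mod expn_gt0.
- exact: divn_eq.
Qed.

Lemma U4c p c : c < 4 ->
  (c = 0 /\ U (4 * p + c) = U p /\ U (4 * p + c).+1 = (U p).+1) \/
  (c = 1 /\ U (4 * p + c) = (U p).+1 /\ U (4 * p + c).+1 = (minn (U p) (U p.+1)).+2) \/
  (c = 2 /\ U (4 * p + c) = (minn (U p) (U p.+1)).+2 /\ U (4 * p + c).+1 = (U p.+1).+1) \/
  (c = 3 /\ U (4 * p + c) = (U p.+1).+1 /\ U (4 * p + c).+1 = U p.+1).
Proof.
case: c => [|[|[|[|c]]]] // _.
- left; split => //; rewrite addn0 U40; split => //. by rewrite -addn1 U41.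
- right; left; split => //; rewrite U41; split => //.
  by rewrite (_ : (4 * p + 1).+1 = 4 * p + 2) ?U42 //; lia.
- right; right; left; split => //; rewrite U42; split => //.
  by rewrite (_ : (4 * p + 2).+1 = 4 * p + 3) ?U43 //; lia.
- right; right; right; split => //; rewrite U43; split => //.
  by rewrite (_ : (4 * p + 3).+1 = 4 * p.+1) ?U40 //; lia.
Qed.

Lemma E_to_O l e : (forall p w, w < 4 ^ l -> U (p * 4 ^ l + w) <= maxn (U p) (U p.+1) + e) ->
  forall p w, w < 4 ^ l.+1 -> U (p * 4 ^ l.+1 + w) <= minn (U p) (U p.+1) + e + 2.
Proof.
move=> H p w Hw; have [c [w' [Hc Hw' ->]]] := split_lead Hw.
have -> : p * 4 ^ l.+1 + (c * 4 ^ l + w') = (4 * p + c) * 4 ^ l + w' by rewrite expnS; lia.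
have := H (4 * p + c) w' Hw'.
have [S1 S2] := U_step p.
case: (U4c p Hc) => [[_ [-> ->]]|[[_ [-> ->]]|[[_ [-> ->]]|[_ [-> ->]]]]]; lia.
Qed.

Lemma O_to_E l e : (forall p w, w < 4 ^ l -> U (p * 4 ^ l + w) <= minn (U p) (U p.+1) + e) ->
  forall p w, w < 4 ^ l.+1 -> U (p * 4 ^ l.+1 + w) <= maxn (U p) (U p.+1) + e + 1.
Proof.
move=> H p w Hw; have [c [w' [Hc Hw' ->]]] := split_lead Hw.
have -> : p * 4 ^ l.+1 + (c * 4 ^ l + w') = (4 * p + c) * 4 ^ l + w' by rewrite expnS; lia.
have := H (4 * p + c) w' Hw'.
have [S1 S2] := U_step p.
case: (U4c p Hc) => [[_ [-> ->]]|[[_ [-> ->]]|[[_ [-> ->]]|[_ [-> ->]]]]]; lia.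
Qed.

Lemma EO j :
  (forall p w, w < 4 ^ (2 * j) -> U (p * 4 ^ (2 * j) + w) <= maxn (U p) (U p.+1) + 3 * j) /\
  (forall p w, w < 4 ^ (2 * j).+1 -> U (p * 4 ^ (2 * j).+1 + w) <= minn (U p) (U p.+1) + 3 * j + 2).
Proof.
have step : forall j, (forall p w, w < 4 ^ (2 * j) -> U (p * 4 ^ (2 * j) + w) <= maxn (U p) (U p.+1) + 3 * j) ->
  (forall p w, w < 4 ^ (2 * j).+1 -> U (p * 4 ^ (2 * j).+1 + w) <= minn (U p) (U p.+1) + 3 * j + 2).
  move=> j0 H; exact: E_to_O H.
elim: j => [|j [_ IHO]].
  have E0 : forall p w, w < 4 ^ (2 * 0) -> U (p * 4 ^ (2 * 0) + w) <= maxn (U p) (U p.+1) + 3 * 0.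
    move=> p [|w] // _. rewrite muln0 expn0 muln1 addn0 addn0. exact: leq_maxl.
  split => //. exact: step.
have E1 : forall p w, w < 4 ^ (2 * j.+1) -> U (p * 4 ^ (2 * j.+1) + w) <= maxn (U p) (U p.+1) + 3 * j.+1.
  have -> : 2 * j.+1 = (2 * j).+1.+1 by lia.
  have IHO' : forall p w, w < 4 ^ (2 * j).+1 -> U (p * 4 ^ (2 * j).+1 + w) <= minn (U p) (U p.+1) + (3 * j + 2).
    by move=> p w Hw; rewrite addnA; apply: IHO.
  move=> p w Hw; have := O_to_E IHO' p Hw. lia.
split => //. exact: step.
Qed.

Lemma U16 p c : c < 6 -> U (16 * p + c) <= U p + 2.
Proof.
have [S1 S2] := U_step p.
case: c => [|[|[|[|[|[|c]]]]]] // _.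
- rewrite addn0 (_ : 16 * p = 4 * (4 * p)); last lia. rewrite !U40; lia.
- rewrite (_ : 16 * p + 1 = 4 * (4 * p) + 1); last lia. rewrite U41 U40; lia.
- rewrite (_ : 16 * p + 2 = 4 * (4 * p) + 2); last lia. rewrite U42 U40.
  rewrite (_ : (4 * p).+1 = 4 * p + 1); last lia. rewrite U41; lia.
- rewrite (_ : 16 * p + 3 = 4 * (4 * p) + 3); last lia. rewrite U43.
  rewrite (_ : (4 * p).+1 = 4 * p + 1); last lia. rewrite U41; lia.
- rewrite (_ : 16 * p + 4 = 4 * (4 * p + 1)); last lia. rewrite U40 U41; lia.
- rewrite (_ : 16 * p + 5 = 4 * (4 * p + 1) + 1); last lia. rewrite U41 U41; lia.
Qed.

Lemma U16_6 p : U (16 * p + 6) <= U p + 3.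
Proof.
rewrite (_ : 16 * p + 6 = 4 * (4 * p + 1) + 2); last lia. rewrite U42 U41; lia.
Qed.

Lemma QA k : forall p w, w < Rg 0 k * 4 + 2 -> U (p * 4 ^ (2 * k).+1 + w) <= U p + 3 * k + 1.
Proof.
elim: k => [|k IH] p w Hw.
  rewrite /Rg /= in Hw. rewrite muln0 expn1.
  case: w Hw => [|[|w]] // _.
  - rewrite addn0 mulnC U40; lia.
  - rewrite mulnC U41; lia.
have HA : Rg 0 k.+1 * 4 + 2 = 6 * 4 ^ (2 * k).+1 + (Rg 0 k * 4 + 2).
  rewrite RgS /= Rg_add expnS. lia.
have Hex : forall q, q * 4 ^ (2 * k.+1).+1 = (16 * q) * 4 ^ (2 * k).+1.
  move=> q; have -> : 2 * k.+1 = (2 * k).+1.+1 by lia. rewrite !expnS. lia.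
rewrite Hex.
case: (ltnP w (6 * 4 ^ (2 * k).+1)) => Hw6.
- have Hpos : 0 < 4 ^ (2 * k).+1 by rewrite expn_gt0.
  set B := 4 ^ (2 * k).+1 in Hw6 Hpos *.
  have Hc : w %/ B < 6 by rewrite ltn_divLR // mulnC.
  have Hw' : w %% B < B by rewrite ltn_mod.
  have -> : 16 * p * B + w = (16 * p + w %/ B) * B + w %% B.
    have := divn_eq w B. lia.
  have := (EO k).2 (16 * p + w %/ B) (w %% B) Hw'; rewrite -/B.
  have := U16 p Hc. lia.
- have Hw' : w - 6 * 4 ^ (2 * k).+1 < Rg 0 k * 4 + 2 by lia.
  have := IH (16 * p + 6) _ Hw'.
  have -> : (16 * p + 6) * 4 ^ (2 * k).+1 + (w - 6 * 4 ^ (2 * k).+1) = 16 * p * 4 ^ (2 * k).+1 + w by lia.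
  have := U16_6 p. lia.
Qed.

Lemma SP_of K N : U N = K -> (forall m, m < N -> U m < K) -> SP_t_is K N.
Proof.
move=> HN Hm; split; first by rewrite -HN; exact: PPL_U.
move=> m Hlt /PPL_uniq HK. have := Hm m Hlt. lia.
Qed.

Lemma base4_A k : base4 (rep12 k ++ [:: 2]) = Rg 0 k * 4 + 2.
Proof. by rewrite /base4 foldl_cat. Qed.

Lemma base4_c c j : base4 (c :: rep12 j ++ [:: 2]) = Rg c j * 4 + 2.
Proof. by rewrite /base4 /= foldl_cat mul0n add0n. Qed.

Theorem corollary15 :
  (forall k, SP_t_is (3 * k + 2) (base4 (rep12 k ++ [:: 2]))) /\
  (forall k, 1 <= k -> SP_t_is (3 * k) (base4 (1 :: rep12 k.-1 ++ [:: 2]))) /\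
  (forall k, 1 <= k -> SP_t_is (3 * k + 1) (base4 (2 :: rep12 k.-1 ++ [:: 2]))).
Proof.
have U01 : U 0 <= U 1 by rewrite U0 U1.
have U12 : U 1 <= U 2 by rewrite U1 U2.
have U23 : U 2 <= U 3.
  by rewrite (_ : 3 = 4 * 0 + 3) // U43 U1 U2.
split; [|split].
- move=> k; rewrite base4_A; apply: SP_of.
  + have [E1 E2] := Rg_U k U01. rewrite U_end // E1 U0. lia.
  + move=> m Hm. have := @QA k 0 _ Hm. rewrite mul0n add0n U0. lia.
- case=> [|k] // _; rewrite base4_c /=; apply: SP_of.
  + have [E1 E2] := Rg_U k U12. rewrite U_end // E1 U1. lia.
  + move=> m Hm.
    have HR : Rg 1 k * 4 + 2 = 4 ^ (2 * k).+1 + (Rg 0 k * 4 + 2).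
      rewrite Rg_add expnS. lia.
    case: (ltnP m (4 ^ (2 * k).+1)) => Hm1.
    * have := (EO k).2 0 m Hm1. rewrite mul0n add0n U0 U1. lia.
    * have Hw : m - 4 ^ (2 * k).+1 < Rg 0 k * 4 + 2 by lia.
      have := @QA k 1 _ Hw. rewrite mul1n U1.
      have -> : 4 ^ (2 * k).+1 + (m - 4 ^ (2 * k).+1) = m by lia. lia.
- case=> [|k] // _; rewrite base4_c /=; apply: SP_of.
  + have [E1 E2] := Rg_U k U23. rewrite U_end // E1 U2. lia.
  + move=> m Hm.
    have HR : Rg 2 k * 4 + 2 = 2 * 4 ^ (2 * k).+1 + (Rg 0 k * 4 + 2).
      rewrite Rg_add expnS. lia.
    case: (ltnP m (4 ^ (2 * k).+1)) => Hm1.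
    * have := (EO k).2 0 m Hm1. rewrite mul0n add0n U0 U1. lia.
    case: (ltnP m (2 * 4 ^ (2 * k).+1)) => Hm2.
    * have Hw : m - 4 ^ (2 * k).+1 < 4 ^ (2 * k).+1 by lia.
      have := (EO k).2 1 _ Hw. rewrite mul1n U1 U2.
      have -> : 4 ^ (2 * k).+1 + (m - 4 ^ (2 * k).+1) = m by lia. lia.
    * have Hw : m - 2 * 4 ^ (2 * k).+1 < Rg 0 k * 4 + 2 by lia.
      have := @QA k 2 _ Hw. rewrite U2.
      have -> : 2 * 4 ^ (2 * k).+1 + (m - 2 * 4 ^ (2 * k).+1) = m by lia. lia.
Qed.
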